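(* Fix $\varepsilon\in\{1,-1\}$, $m\in\{1,2,5,7,8,10,11,13,14,16,17,19,22,23\}$, and a nonnegative integer $n$ with $\delta_m(n)$ squarefree. Let $\ell$ be a prime of bad reduction for $E_{m,n}$. Then $E_{m,n}$ has multiplicative reduction at $\ell$, and: (i) if $\ell=2$, the reduction is split; (ii) if $\ell\mid m+24n$, the reduction is split; (iii) if $\ell\mid f_m(n)$, the reduction is split when $\ell\equiv1\pmod3$ and nonsplit when $\ell\equiv2\pmod3$.
   Context: Let $f_m(n)=62208n^2+(5184m-432\varepsilon)n+(108m^2-18\varepsilon m+1)$; $i=1$ if $m$ odd, $i=2$ if $m$ even and $m\ne8,16$, $i=4$ if $m\in\{8,16\}$; $\delta_m(n)=2^{1-i}(m+24n)f_m(n)$. Put $A=18(m+24n)-\varepsilon$, $B=4\varepsilon/9$, $D=-3$, $r=1/3+A^2$, $H(m,n)=\frac1{16}(2ABD+2A^2Dr+3r^2)$, $J(m,n)=\frac1{64}(B^2D+2ABDr+A^2Dr^2+r^3)$ (integers), and $E_{m,n}:y^2+xy=x^3+H(m,n)x+J(m,n)$. *)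

(* Defs.v *)
From HB Require Import structures.
From mathcomp Require Import all_boot all_order all_algebra.
Set Implicit Arguments. Unset Strict Implicit. Unset Printing Implicit Defensive.
Import Order.TTheory GRing.Theory Num.Theory.
Local Open Scope ring_scope.

(* y^2 + a1 xy + a3 y = x^3 + a2 x^2 + a4 x + a6 over Q *)
Record wmodel := WModel { wa1 : rat; wa2 : rat; wa3 : rat; wa4 : rat; wa6 : rat }.

Definition disc (E : wmodel) : rat :=
  let a1 := wa1 E in let a2 := wa2 E in let a3 := wa3 E in
  let a4 := wa4 E in let a6 := wa6 E in
  let b2 := a1 ^+ 2 + 4 * a2 in
  let b4 := 2 * a4 + a1 * a3 in
  let b6 := a3 ^+ 2 + 4 * a6 in
  let b8 := a1 ^+ 2 * a6 + 4 * a2 * a6 - a1 * a3 * a4 + a2 * a3 ^+ 2 - a4 ^+ 2 in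
  - b2 ^+ 2 * b8 - 8 * b4 ^+ 3 - 27 * b6 ^+ 2 + 9 * b2 * b4 * b6.

(* Change of variables x = u^2 x' + r, y = u^3 y' + u^2 s x' + t (Silverman III.1) *)
Definition transform (E : wmodel) (u r s t : rat) : wmodel :=
  let a1 := wa1 E in let a2 := wa2 E in let a3 := wa3 E in
  let a4 := wa4 E in let a6 := wa6 E in
  WModel ((a1 + 2 * s) / u)
         ((a2 - s * a1 + 3 * r - s ^+ 2) / u ^+ 2)
         ((a3 + r * a1 + 2 * t) / u ^+ 3)
         ((a4 - s * a3 + 2 * r * a2 - (t + r * s) * a1 + 3 * r ^+ 2 - 2 * s * t) / u ^+ 4)
         ((a6 + r * a4 + r ^+ 2 * a2 + r ^+ 3 - t * a3 - t ^+ 2 - r * t * a1) / u ^+ 6).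

Definition wiso (E E' : wmodel) : Prop :=
  exists u r s t : rat, u != 0 /\ E' = transform E u r s t.

Definition pintegral (p : nat) (x : rat) : bool := ~~ (p %| `|denq x|)%N.
Definition model_pintegral (p : nat) (E : wmodel) : bool :=
  [&& pintegral p (wa1 E), pintegral p (wa2 E), pintegral p (wa3 E),
      pintegral p (wa4 E) & pintegral p (wa6 E)].
Definition vp (p : nat) (x : rat) : nat := logn p `|numq x|.

Definition minimal_model_at (p : nat) (E E' : wmodel) : Prop :=
  wiso E E' /\ model_pintegral p E' /\
  forall E'', wiso E E'' -> model_pintegral p E'' ->
    (vp p (disc E') <= vp p (disc E''))%N.

Definition redF (p : nat) (x : rat) : 'F_p := (numq x)%:~R / (denq x)%:~R.

Definition singular_point (K : fieldType) (b1 b2 b3 b4 b6 x0 y0 : K) : Prop :=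
  [/\ y0 ^+ 2 + b1 * x0 * y0 + b3 * y0 - x0 ^+ 3 - b2 * x0 ^+ 2 - b4 * x0 - b6 = 0,
      b1 * y0 - 3 * x0 ^+ 2 - 2 * b2 * x0 - b4 = 0 &
      2 * y0 + b1 * x0 + b3 = 0].
(* tangent cone at (x0,y0) is Y^2 + b1 XY - (3 x0 + b2) X^2 *)
Definition is_node (K : fieldType) (b1 b2 x0 : K) : Prop :=
  b1 ^+ 2 + 4 * (3 * x0 + b2) != 0.
Definition rational_tangents (K : fieldType) (b1 b2 x0 : K) : Prop :=
  exists l : K, l ^+ 2 + b1 * l - (3 * x0 + b2) = 0.

Definition red_node (p : nat) (E' : wmodel) (x0 y0 : 'F_p) : Prop :=
  singular_point (redF p (wa1 E')) (redF p (wa2 E')) (redF p (wa3 E'))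
                 (redF p (wa4 E')) (redF p (wa6 E')) x0 y0 /\
  is_node (redF p (wa1 E')) (redF p (wa2 E')) x0.

Definition bad_reduction (p : nat) (E : wmodel) : Prop :=
  exists E', minimal_model_at p E E' /\ (0 < vp p (disc E'))%N.
Definition multiplicative_reduction (p : nat) (E : wmodel) : Prop :=
  exists E', minimal_model_at p E E' /\ exists x0 y0 : 'F_p, red_node E' x0 y0.
Definition split_multiplicative (p : nat) (E : wmodel) : Prop :=
  exists E', minimal_model_at p E E' /\ exists x0 y0 : 'F_p,
    red_node E' x0 y0 /\ rational_tangents (redF p (wa1 E')) (redF p (wa2 E')) x0.
Definition nonsplit_multiplicative (p : nat) (E : wmodel) : Prop :=
  multiplicative_reduction p E /\ ~ split_multiplicative p E.

Definition f_m (m n : nat) (eps : int) : int :=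
  (* 62208 = 2^8*3^5, 5184 = 2^6*3^4, 432 = 2^4*3^3 (written as products
     to avoid building large unary numerals) *)
  (2 ^+ 8 * 3 ^+ 5) * (n%:Z) ^+ 2
  + ((2 ^+ 6 * 3 ^+ 4) * m%:Z - (2 ^+ 4 * 3 ^+ 3) * eps) * n%:Z
  + (108 * (m%:Z) ^+ 2 - 18 * eps * m%:Z + 1).

Definition i_m (m : nat) : nat :=
  if odd m then 1%N else if (m == 8%N) || (m == 16%N) then 4%N else 2%N.

Definition delta_m (m n : nat) (eps : int) : rat :=
  ((m + 24 * n)%N%:R * (f_m m n eps)%:~R) / (2 ^ (i_m m - 1))%N%:R.

Definition sqfree_int (z : int) : Prop :=
  forall p : nat, prime p -> ~~ (p * p %| `|z|)%N.
Definition squarefree_rat (q : rat) : Prop :=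
  exists z : int, q = z%:~R /\ sqfree_int z.

Definition H_mn (m n : nat) (eps : int) : rat :=
  let A : rat := (18 * (m + 24 * n)%N%:Z - eps)%:~R in
  let B : rat := 4 * eps%:~R / 9 in
  let D : rat := -3 in
  let r : rat := 3^-1 + A ^+ 2 in
  (2 * A * B * D + 2 * A ^+ 2 * D * r + 3 * r ^+ 2) / 16.

Definition J_mn (m n : nat) (eps : int) : rat :=
  let A : rat := (18 * (m + 24 * n)%N%:Z - eps)%:~R in
  let B : rat := 4 * eps%:~R / 9 in
  let D : rat := -3 in
  let r : rat := 3^-1 + A ^+ 2 in
  (B ^+ 2 * D + 2 * A * B * D * r + A ^+ 2 * D * r ^+ 2 + r ^+ 3) / 64.

Definition E_mn (m n : nat) (eps : int) : wmodel :=
  WModel 1 0 0 (H_mn m n eps) (J_mn m n eps).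

(* Main.v *)
Require Import Defs.
From mathcomp Require Import all_boot all_order all_algebra.
From mathcomp Require Import ring lra zify.
From mathcomp Require Import finfield.
Import GRing.Theory Num.Theory.
Local Open Scope ring_scope.



Definition hT {R : comNzRingType} (t w : R) : R :=
  - (3 ^+ 6) * w + (3 * 5 ^+ 3) * t + (2 * 3 ^+ 7) * t ^+ 3 - (3 ^+ 9) * t ^+ 4.
Definition jT {R : comNzRingType} (t w : R) : R :=
  - (3 ^+ 4 * 7) * w ^+ 2 + 2 * t + (2 * 3 ^+ 4 * 5 ^+ 2) * t ^+ 3
  - (2 * 3 ^+ 4 * 313) * t ^+ 4
  + (2 * 3 ^+ 11) * t ^+ 5 - (2 * 3 ^+ 12) * t ^+ 6.
Definition fT {R : comNzRingType} (t : R) : R := (2 ^+ 2 * 3 ^+ 3) * t ^+ 2 - (2 * 3 ^+ 2) * t + 1.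
Definition dgen {R : comNzRingType} (h j : R) : R :=
  - (1 ^+ 2 + 4 * 0) ^+ 2 * (1 ^+ 2 * j + 4 * 0 * j - 1 * 0 * h + 0 * 0 ^+ 2 - h ^+ 2)
  - 8 * (2 * h + 1 * 0) ^+ 3 - 27 * (0 ^+ 2 + 4 * j) ^+ 2
  + 9 * (1 ^+ 2 + 4 * 0) * (2 * h + 1 * 0) * (0 ^+ 2 + 4 * j).

Lemma disc_dgen (h j : rat) : disc (WModel 1 0 0 h j) = dgen h j.
Proof. by []. Qed.

Lemma dgen_morph (R S : comNzRingType) (f : {rmorphism R -> S}) (h j : R) :
  f (dgen h j) = dgen (f h) (f j).
Proof. by rewrite /dgen !(rmorph_nat, rmorphB, rmorphD, rmorphN, rmorphXn, rmorphM, rmorph0, rmorph1). Qed.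

Lemma two_pow_neq0 (K : fieldType) k : (2:K) != 0 -> ((2^k)%N%:R : K) != 0.
Proof. by move=> h; rewrite natrX expf_neq0. Qed.

Lemma dgen_eq (F : fieldType) (t : F) : (2 : F) != 0 ->
  dgen (hT t ((t ^+ 2 + t) / 2)) (jT t ((t ^+ 2 + t) / 2)) = - 2 * t * fT t.
Proof.
move=> h2.
have h4 : (4 : F) != 0 := @two_pow_neq0 F 2 h2.
rewrite /dgen /hT /jT /fT; by field; rewrite ?h2 ?h4.
Qed.

Definition Jgen {F : fieldType} (k e : F) : F :=
  let A := 18 * k - e in
  let B := 4 * e / 9 in
  let D := -3 in
  let r := 3^-1 + A ^+ 2 in
  (B ^+ 2 * D + 2 * A * B * D * r + A ^+ 2 * D * r ^+ 2 + r ^+ 3) / 64.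

Lemma Jgen_eq (F : fieldType) (k e : F) : e = 1 \/ e = -1 ->
  (2 : F) != 0 -> (3 : F) != 0 ->
  Jgen k e = jT (e * k) (((e * k) ^+ 2 + e * k) / 2).
Proof.
move=> he h2 h3.
have h4 : (4 : F) != 0 := @two_pow_neq0 F 2 h2.
have h16 : (16 : F) != 0 := @two_pow_neq0 F 4 h2.
have h64 : (64 : F) != 0 := @two_pow_neq0 F 6 h2.
have h9 : (9 : F) != 0 by rewrite (_ : 9 = 3 * 3) ?mulf_neq0 //; ring.
have h81 : (81 : F) != 0 by rewrite (_ : 81 = 9 * 9) ?mulf_neq0 //; ring.
rewrite /Jgen /jT; case: he => ->; by field; rewrite ?h2 ?h3 ?h4 ?h9 ?h16 ?h64 ?h81.
Qed.

Lemma Fcase_K (K : fieldType) (t w : K) :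
  (2 : K) != 0 -> 2 * w = t ^+ 2 + t -> t = 0 ->
  singular_point 1 0 0 (hT t w) (jT t w) 0 0 /\ is_node 1 0 (0 : K) /\
  rational_tangents 1 0 (0 : K).
Proof.
move=> h2 hw ht.
have hw0 : w = 0.
  by move: hw; rewrite ht expr0n /= addr0 => /eqP; rewrite mulf_eq0 (negbTE h2) => /eqP.
rewrite ht hw0 /hT /jT; split; first by split; ring.
split; last by exists 0; ring.
rewrite /is_node (_ : _ + _ = 1) ?oner_neq0 //; ring.
Qed.

Lemma Fcase_2 (K : fieldType) (h j : K) :
  (2 : K) = 0 -> h ^+ 2 - j = 0 ->
  singular_point 1 0 0 h j 0 h /\ is_node 1 0 (0 : K) /\
  rational_tangents 1 0 (0 : K).
Proof.
move=> h2 hj; split; first split.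
- by transitivity (h ^+ 2 - j); [ring | exact: hj].
- ring.
- by rewrite mulr0 addr0 addr0 h2 mul0r.
split; last by exists 0; ring.
rewrite /is_node (_ : _ + _ = 1) ?oner_neq0 //; ring.
Qed.


Lemma hT_morph (R S : comNzRingType) (f : {rmorphism R -> S}) (t w : R) :
  f (hT t w) = hT (f t) (f w).
Proof. by rewrite /hT !(rmorph_nat, rmorphB, rmorphD, rmorphN, rmorphXn, rmorphM). Qed.

Lemma hT_intr (S : comNzRingType) (t w : int) : (hT t w)%:~R = hT (t%:~R : S) w%:~R.
Proof. exact (@hT_morph _ _ (intr : {rmorphism int -> S}) _ _). Qed.

Lemma jT_morph (R S : comNzRingType) (f : {rmorphism R -> S}) (t w : R) :
  f (jT t w) = jT (f t) (f w).
Proof. by rewrite /jT !(rmorph_nat, rmorphB, rmorphD, rmorphN, rmorphXn, rmorphM). Qed.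

Lemma jT_intr (S : comNzRingType) (t w : int) : (jT t w)%:~R = jT (t%:~R : S) w%:~R.
Proof. exact (@jT_morph _ _ (intr : {rmorphism int -> S}) _ _). Qed.

Lemma fT_morph (R S : comNzRingType) (f : {rmorphism R -> S}) (t : R) :
  f (fT t) = fT (f t).
Proof. by rewrite /fT !(rmorph_nat, rmorphB, rmorphD, rmorphN, rmorphXn, rmorphM, rmorph1). Qed.

Lemma fT_intr (S : comNzRingType) (t : int) : (fT t)%:~R = fT (t%:~R : S).
Proof. exact (@fT_morph _ _ (intr : {rmorphism int -> S}) _). Qed.

Definition Hgen {F : fieldType} (k e : F) : F :=
  let A := 18 * k - e in
  let B := 4 * e / 9 in
  let D := -3 in
  let r := 3^-1 + A ^+ 2 in
  (2 * A * B * D + 2 * A ^+ 2 * D * r + 3 * r ^+ 2) / 16.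

Lemma Hgen_eq (F : fieldType) (k e : F) : e = 1 \/ e = -1 ->
  (2 : F) != 0 -> (3 : F) != 0 ->
  Hgen k e = hT (e * k) (((e * k) ^+ 2 + e * k) / 2).
Proof.
move=> he h2 h3.
have h4 : (4 : F) != 0 := @two_pow_neq0 F 2 h2.
have h16 : (16 : F) != 0 := @two_pow_neq0 F 4 h2.
have h9 : (9 : F) != 0 by rewrite (_ : 9 = 3 * 3) ?mulf_neq0 //; ring.
rewrite /Hgen /hT; case: he => ->; by field; rewrite ?h2 ?h3 ?h4 ?h9 ?h16.
Qed.

Lemma Fcase_f (K : fieldType) (t w : K) :
  (2 : K) != 0 -> 2 * w = t ^+ 2 + t -> fT t = 0 ->
  let x0 := - (1/4) + 3 * t / 2 in
  let y0 := - x0 / 2 in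
  singular_point 1 0 0 (hT t w) (jT t w) x0 y0 /\ is_node 1 0 x0 /\
  rational_tangents 1 0 x0.
Proof.
move=> h2 hw hf x0 y0.
have h4 : (4 : K) != 0 := @two_pow_neq0 K 2 h2.
have h8 : (8 : K) != 0 := @two_pow_neq0 K 3 h2.
have h16 : (16 : K) != 0 := @two_pow_neq0 K 4 h2.
have h32 : (32 : K) != 0 := @two_pow_neq0 K 5 h2.
have hw' : w = (t ^+ 2 + t) / 2 by rewrite -hw; field.
rewrite /hT /jT hw' /y0 /x0; split; first split.
- apply: (@eq_trans _ _ ((0 + (17) / (2 ^+ 5) * t ^+ 1 + (3 ^+ 6) / (2 ^+ 4) * t ^+ 2 - (3 ^+ 7 * 5) / (2 ^+ 3) * t ^+ 3 + (3 ^+ 9) / (2) * t ^+ 4) * fT t)).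
    by rewrite /fT; field; rewrite h2 h4 h8 h16 h32.
  by rewrite hf mulr0.
- apply: (@eq_trans _ _ ((0 - (1) / (2 ^+ 4) - (3 ^+ 4) / (2 ^+ 3) * t ^+ 1 + (3 ^+ 6) / (2 ^+ 2) * t ^+ 2) * fT t)).
    by rewrite /fT; field; rewrite ?h2 ?h4 ?h8 ?h16 ?h32.
  by rewrite hf mulr0.
- by field; rewrite ?h2 ?h4 ?h8 ?h16 ?h32.
split.
- rewrite /is_node; apply/eqP => hb.
  have e : 3 * fT t = (1 ^+ 2 + 4 * (3 * (- (1/4) + 3 * t / 2) + 0))^+2 + (1 ^+ 2 + 4 * (3 * (- (1/4) + 3 * t / 2) + 0)) + 1.
    by rewrite /fT; field; rewrite ?h2 ?h4 ?h8 ?h16 ?h32.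
  move: e; rewrite hb hf mulr0 expr0n /= !add0r => /eqP.
  by rewrite eq_sym oner_eq0.
exists ((((1 + 12 * (- (1/4) + 3 * t / 2))) ^+ 2 - 1) / 2).
apply: (@eq_trans _ _ ((0 + (3 ^+ 2) / (2) - (3 ^+ 3 * 5) / (2) * t ^+ 1 + (3 ^+ 5) * t ^+ 2) * fT t)).
  by rewrite /fT; field; rewrite ?h2 ?h4 ?h8 ?h16 ?h32.
by rewrite hf mulr0.
Qed.




Lemma pint_ex l (x : rat) : pintegral l x ->
  exists a b : int, ~~ (l %| `|b|)%N /\ x * b%:~R = a%:~R.
Proof. by move=> h; exists (numq x), (denq x); split => //; rewrite numqE. Qed.

Lemma ex_pint l (x : rat) : prime l ->
  (exists a b : int, ~~ (l %| `|b|)%N /\ x * b%:~R = a%:~R) -> pintegral l x.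
Proof.
move=> pl [a [b [hb hx]]]; rewrite /pintegral; apply/negP => hd.
have e : numq x * b = a * denq x.
  apply/eqP; rewrite -(eqr_int rat) !rmorphM /= numqE -hx; apply/eqP; ring.
have : (`|denq x| %| `|numq x| * `|b|)%N.
  by rewrite -abszM e abszM dvdn_mull.
rewrite Gauss_dvdr; last by rewrite coprime_sym coprime_num_den.
by move=> /(dvdn_trans hd); rewrite (negbTE hb).
Qed.

Lemma pintD l x y : prime l -> pintegral l x -> pintegral l y -> pintegral l (x + y).
Proof.
move=> pl /pint_ex [a [b [hb hx]]] /pint_ex [c [d [hd hy]]].
apply: ex_pint => //; exists (a * d + c * b), (b * d); split.
  by rewrite abszM Euclid_dvdM // negb_or hb hd.
by rewrite !rmorphD !rmorphM /= -hx -hy; ring.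
Qed.

Lemma pintM l x y : prime l -> pintegral l x -> pintegral l y -> pintegral l (x * y).
Proof.
move=> pl /pint_ex [a [b [hb hx]]] /pint_ex [c [d [hd hy]]].
apply: ex_pint => //; exists (a * c), (b * d); split.
  by rewrite abszM Euclid_dvdM // negb_or hb hd.
by rewrite !rmorphM /= -hx -hy; ring.
Qed.

Lemma pintN l x : prime l -> pintegral l x -> pintegral l (- x).
Proof.
move=> pl /pint_ex [a [b [hb hx]]].
apply: ex_pint => //; exists (- a), b; split => //.
by rewrite rmorphN /= -hx; ring.
Qed.

Lemma pint_int l (z : int) : prime l -> pintegral l z%:~R.
Proof.
move=> pl; apply: ex_pint => //; exists z, 1; split.
  by rewrite Euclid_dvd1.
by rewrite rmorph1 mulr1.
Qed.

Lemma pint_nat l (k : nat) : prime l -> pintegral l k%:R.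
Proof. by move=> pl; rewrite pmulrn; apply: pint_int. Qed.

Lemma pintX l x k : prime l -> pintegral l x -> pintegral l (x ^+ k).
Proof.
move=> pl hx; elim: k => [|k ih]; first by rewrite expr0 -[1]/((1:int)%:~R); apply: pint_int.
by rewrite exprS; apply: pintM.
Qed.

Ltac pint_solve pl :=
  repeat (first [ assumption |
    match goal with
    | |- is_true (pintegral _ (_ + _)) => apply: pintD
    | |- is_true (pintegral _ (- _)) => apply: pintN
    | |- is_true (pintegral _ (_ * _)) => apply: pintM
    | |- is_true (pintegral _ (_ ^+ _)) => apply: pintX
    | |- is_true (pintegral _ (GRing.natmul _ _)) => apply: pint_nat
    end ]).

Lemma disc_pint l E : prime l -> model_pintegral l E -> pintegral l (disc E).
Proof.
move=> pl; case: E => a1 a2 a3 a4 a6 /=; rewrite /model_pintegral /=.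
case/and5P => h1 h2 h3 h4 h6; rewrite /disc /=.
pint_solve pl.
Qed.




Lemma disc_transform E u r s t : u != 0 ->
  disc (transform E u r s t) * u ^+ 12 = disc E.
Proof.
move=> hu; case: E => a1 a2 a3 a4 a6; rewrite /disc /transform /=.
by field.
Qed.

Lemma logn_one_zero l a b : prime l -> coprime a b ->
  logn l a = 0%N \/ logn l b = 0%N.
Proof.
move=> pl cab; case: (posnP (logn l a)) => ha; first by left.
right; apply: logn_coprime; rewrite prime_coprime //.
have la : (l %| a)%N.
  by move: ha; rewrite logn_gt0 mem_primes => /and3P [].
apply/negP => lb.
have : (l %| gcdn a b)%N by rewrite dvdn_gcd la lb.
by rewrite (eqP cab) Euclid_dvd1.
Qed.

Lemma min_ineq l (dz : int) (x u : rat) : prime l -> dz != 0 ->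
  (logn l `|dz| < 12)%N -> u != 0 -> x * u ^+ 12 = dz%:~R -> pintegral l x ->
  (logn l `|dz| <= vp l x)%N.
Proof.
move=> pl dz0 dlt u0 hx px.
have x0 : x != 0 by apply: contraNneq dz0 => x0; move: hx; rewrite x0 mul0r => /esym/eqP; rewrite intr_eq0.
set N := numq x; set M := denq x; set U1 := numq u; set U2 := denq u.
have e : N * U1 ^+ 12 = dz * U2 ^+ 12 * M.
  rewrite /N /U1 /U2 /M; apply/eqP; rewrite -(eqr_int rat) !rmorphM /=.
  rewrite !numqE -hx; apply/eqP; ring.
have N0 : N != 0 by rewrite numq_eq0.
have U10 : U1 != 0 by rewrite numq_eq0.
have U20 : U2 != 0 by apply: denq_neq0.
have M0 : M != 0 by apply: denq_neq0.
have e2 : (`|N| * `|U1| ^ 12 = `|dz| * `|U2| ^ 12 * `|M|)%N.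
  by rewrite -!abszX -!abszM e.
have pos (z : int) : z != 0 -> (0 < `|z|)%N by rewrite absz_gt0.
have p1 : (0 < `|U1| ^ 12)%N by rewrite expn_gt0 pos ?orbT.
have p2 : (0 < `|U2| ^ 12)%N by rewrite expn_gt0 pos ?orbT.
have := congr1 (logn l) e2.
move: p1 p2.
set q1 := (`|U1| ^ 12)%N; set q2 := (`|U2| ^ 12)%N => p1 p2.
rewrite !lognM ?muln_gt0 ?pos ?p1 ?p2 //.

have -> : logn l `|M| = 0%N.
  apply: logn_coprime; rewrite prime_coprime //.
have := @logn_one_zero l _ _ pl (coprime_num_den u).
rewrite /vp -/N -/U1 -/U2 => h.
lia.
Qed.




Lemma redF1 l : redF l 1 = 1.
Proof. by rewrite /redF /= rmorph1 divr1. Qed.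
Lemma redF0 l : redF l 0 = 0.
Proof. by rewrite /redF /= rmorph0 mul0r. Qed.
Lemma redF_int l (z : int) : redF l z%:~R = z%:~R.
Proof. by rewrite /redF numq_int denq_int rmorph1 divr1. Qed.
Lemma pint1 l : prime l -> pintegral l 1.
Proof. by move=> pl; rewrite /pintegral /= Euclid_dvd1. Qed.
Lemma pint0 l : prime l -> pintegral l 0.
Proof. by move=> pl; rewrite /pintegral /= Euclid_dvd1. Qed.
Lemma vp_int l (z : int) : vp l z%:~R = logn l `|z|.
Proof. by rewrite /vp numq_int. Qed.

Lemma Fl_nat0 l (k : nat) : prime l -> (l %| k)%N -> (k%:R : 'F_l) = 0.
Proof. by move=> pl hk; apply/eqP; rewrite -(dvdn_pcharf (pchar_Fp pl)). Qed.
Lemma Fl_nat_neq0 l (k : nat) : prime l -> ~~ (l %| k)%N -> (k%:R : 'F_l) != 0.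
Proof. by move=> pl hk; rewrite -(dvdn_pcharf (pchar_Fp pl)). Qed.

Lemma Fl_int0 l (z : int) : prime l -> (l %| `|z|)%N -> (z%:~R : 'F_l) = 0.
Proof.
move=> pl; case: z => k /= hk.
  by rewrite -pmulrn; apply: Fl_nat0.
by rewrite NegzE rmorphN /= -pmulrn Fl_nat0 ?oppr0.
Qed.

Lemma f_eq (eps : int) m n : eps = 1 \/ eps = -1 ->
  f_m m n eps = fT (eps * (m + 24 * n)%N%:Z).
Proof.
by rewrite /f_m /fT PoszD PoszM; case=> ->; ring.
Qed.

Opaque hT jT fT.


Lemma nat_w (k : nat) : exists w : nat, (2 * w = k * (k + 1))%N.
Proof.
exists (k * (k + 1) %/ 2)%N; rewrite mulnC divnK // dvdn2 oddM oddD /=.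
by case: (odd k).
Qed.

Lemma exists_w (eps : int) (K : nat) : eps = 1 \/ eps = -1 -> (0 < K)%N ->
  exists w : int, 2 * w = (eps * K%:Z) ^+ 2 + eps * K%:Z.
Proof.
case=> -> K0.
  have [w0 hw0] := nat_w K; exists w0%:Z.
  have := congr1 Posz hw0; rewrite !PoszM PoszD => ->; ring.
case: K K0 => // k _.
have [w0 hw0] := nat_w k; exists w0%:Z.
have := congr1 Posz hw0; rewrite !PoszM PoszD => ->.
rewrite -addn1 PoszD; ring.
Qed.

Lemma half_eq (F : fieldType) (x y : F) : (2:F) != 0 -> 2 * x = y -> x = y / 2.
Proof. by move=> h2 <-; field. Qed.

Lemma E_eq (eps : int) m n (w : int) : eps = 1 \/ eps = -1 ->
  2 * w = (eps * (m + 24 * n)%N%:Z) ^+ 2 + eps * (m + 24 * n)%N%:Z ->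
  E_mn m n eps = WModel 1 0 0 (hT (eps * (m + 24 * n)%N%:Z) w)%:~R
                               (jT (eps * (m + 24 * n)%N%:Z) w)%:~R.
Proof.
move=> he hw.
have eH : H_mn m n eps = Hgen ((m + 24 * n)%N%:Z)%:~R eps%:~R.
  rewrite /H_mn /Hgen. rewrite rmorphB. rewrite rmorphM. rewrite (rmorph_nat _ 18). reflexivity.
have eJ : J_mn m n eps = Jgen ((m + 24 * n)%N%:Z)%:~R eps%:~R.
  rewrite /J_mn /Jgen rmorphB rmorphM (rmorph_nat _ 18). reflexivity.
rewrite /E_mn eH eJ.
move: (m + 24 * n)%N hw => K hw.
have hw' : (w%:~R : rat) = (((eps * K%:Z)%:~R) ^+ 2 + (eps * K%:Z)%:~R) / 2.
  apply: half_eq. done.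
  have := congr1 (intr : int -> rat) hw.
  rewrite rmorphM (rmorph_nat _ 2) rmorphD rmorphXn. exact.
have he' : (eps%:~R : rat) = 1 \/ (eps%:~R : rat) = -1.
  by case: he => ->; [left; rewrite rmorph1 | right; rewrite rmorphN1].
rewrite (hT_intr rat). rewrite (jT_intr rat). rewrite hw'. rewrite (rmorphM _ eps).

have h2 : (2 : rat) != 0 by [].
have h3 : (3 : rat) != 0 by [].
rewrite -(@Hgen_eq rat _ _ he' h2 h3).
rewrite -(@Jgen_eq rat _ _ he' h2 h3).
reflexivity.
Qed.


Lemma dgen_int (t w : int) : 2 * w = t ^+ 2 + t ->
  dgen (hT t w) (jT t w) = - 2 * t * fT t.
Proof.
move=> hw; apply/eqP; rewrite -(eqr_int rat); apply/eqP.
have hw' : (w%:~R : rat) = ((t%:~R) ^+ 2 + t%:~R) / 2.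
  apply: half_eq => //.
  have := congr1 (intr : int -> rat) hw.
  by rewrite rmorphM (rmorph_nat _ 2) rmorphD rmorphXn.
transitivity (dgen (hT (t%:~R : rat) w%:~R) (jT (t%:~R : rat) w%:~R)).
  rewrite -hT_intr -jT_intr.
  exact (@dgen_morph _ _ (intr : {rmorphism int -> rat}) _ _).
rewrite hw' dgen_eq //.
rewrite -fT_intr !rmorphM /= rmorphN (rmorph_nat _ 2).
reflexivity.
Qed.

Lemma disc_E (t w : int) : 2 * w = t ^+ 2 + t ->
  disc (WModel 1 0 0 (hT t w)%:~R (jT t w)%:~R) = (- 2 * t * fT t)%:~R.
Proof.
move=> hw; rewrite disc_dgen -(@dgen_int _ _ hw).
symmetry; exact (@dgen_morph _ _ (intr : {rmorphism int -> rat}) _ _).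
Qed.

Lemma fT_neq0 (t : int) : fT t != 0.
Proof.
have -> : fT t = 2 * (54 * t ^+ 2 - 9 * t) + 1.
  Transparent fT. rewrite /fT. Opaque fT. ring.
move: (54 * t ^+ 2 - 9 * t) => x; lia.
Qed.


Lemma int_of_rat_eq (a b : int) : (a%:~R : rat) = b%:~R -> a = b.
Proof. by move/eqP; rewrite eqr_int => /eqP. Qed.

Lemma pow_mod3 (F : pzRingType) (b : F) (n : nat) : b ^+ 3 = 1 -> (n %% 3 = 2)%N ->
  b ^+ n = b ^+ 2.
Proof.
by move=> e3 hn; rewrite (divn_eq n 3) hn exprD mulnC exprM e3 expr1n mul1r.
Qed.

Lemma main_K (eps : int) (K i l : nat) (w : int) :
  eps = 1 \/ eps = -1 -> (0 < K)%N -> (1 <= i <= 4)%N ->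
  2 * w = (eps * K%:Z) ^+ 2 + eps * K%:Z ->
  squarefree_rat ((K%:R * (fT (eps * K%:Z))%:~R) / (2 ^ (i - 1))%N%:R) ->
  prime l ->
  let E := WModel 1 0 0 (hT (eps * K%:Z) w)%:~R (jT (eps * K%:Z) w)%:~R in
  bad_reduction l E ->
  multiplicative_reduction l E /\
  (l = 2%N -> split_multiplicative l E) /\
  ((l %| K)%N -> split_multiplicative l E) /\
  ((l %| `|fT (eps * K%:Z)|)%N ->
     ((l %% 3 = 1)%N -> split_multiplicative l E) /\
     ((l %% 3 = 2)%N -> nonsplit_multiplicative l E)).
Proof.
move=> heps K0 hi hw hsq pl E hbad.
move: hw hsq; set t := eps * K%:Z => hw hsq.
set dz := -2 * t * fT t.
have hdisc : disc E = dz%:~R := @disc_E _ _ hw.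
have absdz : `|dz|%N = (2 * (K * `|fT t|))%N.
  have e1 : `|eps|%N = 1%N by case: heps => ->.
  have e2 : `|(-2)%R|%N = 2%N by [].
  rewrite /dz !abszM e1 e2 absz_nat; lia.
have f0 := fT_neq0 t.
have fpos : (0 < `|fT t|)%N by rewrite absz_gt0.
have dzpos : (0 < `|dz|)%N by rewrite absdz !muln_gt0 K0 fpos.
have dz0 : dz != 0 by rewrite -absz_gt0.
have dlt : (logn l `|dz| < 12)%N.
  case: hsq => z [hz sqz].
  set p := (2 ^ (i - 1))%N in hz.
  have p0 : (0 < p)%N by rewrite expn_gt0.
  have ez : K%:Z * fT t = z * p%:Z.
    apply: int_of_rat_eq; rewrite !rmorphM /=.
    have pq : (p%:R : rat) != 0 by rewrite pnatr_eq0 -lt0n.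
    move: hz; rewrite -!pmulrn => hz.
    rewrite -[LHS](divfK pq) hz; rewrite pmulrn //.
  have z0 : z != 0.
    apply: contraNneq f0 => z0; move: ez; rewrite z0 mul0r => /eqP.
    by rewrite mulf_eq0 (negbTE (_ : K%:Z != 0)) //= ?ltz_nat ?lt0n -?lt0n.
  have ez' : (K * `|fT t|)%N = (`|z| * p)%N.
    by rewrite -[K]absz_nat -abszM ez abszM absz_nat.
  have zpos : (0 < `|z|)%N by rewrite absz_gt0.
  rewrite absdz ez' !lognM ?muln_gt0 ?zpos ?p0 // /p lognX.
  have l2 : (logn l 2 <= 1)%N by rewrite logn_prime //; case: (l == 2%N).
  have lz : (logn l `|z| <= 1)%N.
    rewrite leqNgt; apply/negP => hz2.
    have : (l ^ 2 %| `|z|)%N by rewrite pfactor_dvdn.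
    by rewrite -mulnn (negbTE (sqz l pl)).
  move: hi => /andP [hi1 hi4].
  nia.
have hEE : wiso E E.
  exists 1, 0, 0, 0; split; first exact: oner_neq0.
  rewrite /E /transform /=.
  move: (hT t w)%:~R (jT t w)%:~R => a b.
  by congr WModel; field.
have hEp : model_pintegral l E.
  by rewrite /model_pintegral /E /= pint1 ?pint0 ?pint_int.
have Emin : minimal_model_at l E E.
  rewrite /minimal_model_at; split; first exact hEE; split; first exact hEp.
  move=> E'' [u [r [s [t' [u0 ->]]]]] hp''.
  rewrite hdisc vp_int; apply: (@min_ineq l dz _ u pl dz0 dlt u0).
    by rewrite disc_transform // hdisc.
  exact: disc_pint.
have ldz : (l %| `|dz|)%N.
  case: hbad => E' [[_ [_ hmin']] hv].
  have := hmin' E hEE hEp; rewrite hdisc vp_int => hle.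
  have : (0 < logn l `|dz|)%N by apply: leq_trans hv hle.
  by rewrite logn_gt0 mem_primes => /and3P [].
have hw' : 2 * (w%:~R : 'F_l) = (t%:~R) ^+ 2 + t%:~R.
  have := congr1 (intr : int -> 'F_l) hw.
  by rewrite rmorphM (rmorph_nat _ 2) rmorphD rmorphXn.
have hsplit : (l = 2 \/ (l %| K) \/ (l %| `|fT t|))%N -> split_multiplicative l E.
  move=> hcase; exists E; split; first exact: Emin.
  rewrite /red_node /E /= redF1 redF0 !redF_int.
  case: (eqVneq l 2%N) => [l2 | l2].
  - have h2 : (2 : 'F_l) = 0 by apply: Fl_nat0 => //; rewrite l2.
    have key : (hT t w) ^+ 2 - jT t w
             = 2 * (- t * fT t + 32 * (hT t w) ^+ 3 + 216 * (jT t w) ^+ 2 - 36 * hT t w * jT t w).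
      have e := @dgen_int _ _ hw.
      move: (hT t w) (jT t w) e => h j e.
      have : h ^+ 2 - j - 2 * (- t * fT t + 32 * h ^+ 3 + 216 * j ^+ 2 - 36 * h * j)
             = dgen h j - (- 2 * t * fT t) by rewrite /dgen; ring.
      by rewrite e subrr => /eqP; rewrite subr_eq0 => /eqP.
    have hj : ((hT t w)%:~R : 'F_l) ^+ 2 - (jT t w)%:~R = 0.
      have := congr1 (intr : int -> 'F_l) key.
      by rewrite rmorphB rmorphXn rmorphM (rmorph_nat _ 2) h2 mul0r.
    have [S [N T]] := @Fcase_2 _ _ _ h2 hj.
    by exists 0, (hT t w)%:~R; exact (conj (conj S N) T).
  - have h2 : (2 : 'F_l) != 0.
      by apply: Fl_nat_neq0 => //; rewrite dvdn_prime2 //.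
    rewrite (hT_intr _ t w) (jT_intr _ t w).
    case: hcase => [/eqP | [lK | lf]]; first by rewrite (negbTE l2).
      have ht : (t%:~R : 'F_l) = 0.
        apply: Fl_int0 => //.
        suff -> : `|t|%N = K by [].
        by rewrite /t abszM absz_nat; case: heps => ->; rewrite mul1n.
      have [S [N T]] := @Fcase_K _ _ _ h2 hw' ht.
      by exists 0, 0; exact (conj (conj S N) T).
    have hf : fT (t%:~R : 'F_l) = 0 by rewrite -fT_intr; apply: Fl_int0.
    have [S [N T]] := @Fcase_f _ _ _ h2 hw' hf.
    exact (ex_intro _ _ (ex_intro _ _ (conj (conj S N) T))).
have hnot : (l %| `|fT t|)%N -> (l %% 3 = 2)%N -> False.
  move=> lf l3.
  have hf : fT (t%:~R : 'F_l) = 0 by rewrite -fT_intr; apply: Fl_int0.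
  set b : 'F_l := 18 * t%:~R - 2.
  have e1 : b ^+ 2 + b + 1 = 0.
    have -> : b ^+ 2 + b + 1 = 3 * fT (t%:~R : 'F_l).
      Transparent fT. by rewrite /b /fT; ring. Opaque fT.
    by rewrite hf mulr0.
  have e3 : b ^+ 3 = 1.
    apply/eqP; rewrite -subr_eq0; apply/eqP.
    have -> : b ^+ 3 - 1 = (b - 1) * (b ^+ 2 + b + 1) by ring.
    by rewrite e1 mulr0.
  have e2 : b ^+ 2 = b.
    have := expf_card b; rewrite card_Fp // (@pow_mod3 _ _ _ e3 l3) => ->.
    by [].
  have h3 : (3 : 'F_l) = 0.
    have -> : (3 : 'F_l) = 4 * (b ^+ 2 + b + 1) - ((b ^+ 2 + b + 1) - (b ^+ 2 - b)) ^+ 2 by ring.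
    by rewrite e1 e2 subrr subr0 mulr0 expr0n /= subr0.
  have : (l %| 3)%N by rewrite (dvdn_pcharf (pchar_Fp pl)) h3.
  by rewrite dvdn_prime2 // => /eqP l3'; rewrite l3' in l3.
have hmul : multiplicative_reduction l E.
  have : (l %| 2 * (K * `|fT t|))%N by rewrite -absdz.
  rewrite !Euclid_dvdM // => hc.
  have [E' [hm [x0 [y0 [hn _]]]]] : split_multiplicative l E.
    apply: hsplit; case/or3P: hc => [l2|lK|lf].
    - by left; apply/eqP; rewrite -dvdn_prime2 // ?pdiv_id.
    - by right; left.
    - by right; right.
  by exists E'; split=> //; exists x0, y0.
split=> //; split; first by move=> l2; apply: hsplit; left.
split; first by move=> lK; apply: hsplit; right; left.
move=> lf; split; first by move=> _; apply: hsplit; right; right.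
by move=> l3; exfalso; exact: hnot.
Qed.



Theorem proposition3p4 (eps : int) (m n l : nat) :
  (eps = 1 \/ eps = -1) ->
  m \in [:: 1; 2; 5; 7; 8; 10; 11; 13; 14; 16; 17; 19; 22; 23]%N ->
  squarefree_rat (delta_m m n eps) ->
  prime l ->
  bad_reduction l (E_mn m n eps) ->
  multiplicative_reduction l (E_mn m n eps) /\
  (l = 2%N -> split_multiplicative l (E_mn m n eps)) /\
  ((l %| m + 24 * n)%N -> split_multiplicative l (E_mn m n eps)) /\
  ((l %| `|f_m m n eps|)%N ->
     ((l %% 3 = 1)%N -> split_multiplicative l (E_mn m n eps)) /\
     ((l %% 3 = 2)%N -> nonsplit_multiplicative l (E_mn m n eps))).
Proof.
move=> heps hm hsq pl hbad.
have m0 : (0 < m)%N by move: hm; case: (m) => //.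
have K0 : (0 < m + 24 * n)%N by rewrite addn_gt0 m0.
have [w hw] := @exists_w eps (m + 24 * n)%N heps K0.
have hE := @E_eq eps m n w heps hw.
have hf := @f_eq eps m n heps.
have hi : (1 <= i_m m <= 4)%N by rewrite /i_m; case: ifP => _ //; case: ifP.
move: hbad hsq; rewrite /delta_m hE hf => hbad hsq.
exact: (@main_K eps (m + 24 * n)%N (i_m m) l w heps K0 hi hw hsq pl hbad).
Qed.
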